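(* Let $\mathfrak g$ be a Lie algebra and $V$ a $\mathfrak g$-module with action $x\cdot u$. Set $\mathbb U_0=\mathfrak g$ (degree 0), $\mathbb U_1=V[-1]$ ($V$ placed in degree 1, odd), and recursively $\mathbb U_{-p+1}=\mathrm{Hom}(\mathbb U_1,\mathbb U_{-p+2})$ for $p\ge2$ (so $\mathbb U_{-1}=\mathrm{Hom}(\mathbb U_1,\mathfrak g)$). Writing $x(u)=x\cdot u$ for $x\in\mathfrak g$, $u\in\mathbb U_1$, define brackets on $\mathbb U_{1-}=\bigoplus_{k\le1}\mathbb U_k$ (for pairs of degrees summing to $\le1$) by the Lie bracket of $\mathfrak g$ on $\mathfrak g\otimes\mathfrak g$ and recursively by $[x,u]=x(u)$, $[u,x]=-(-1)^{|x|}x(u)$, $[x,y](u)=[x,y(u)]+(-1)^{|y|}[x(u),y]$ for $x,y\in\mathbb U_{0-}$ and $u\in\mathbb U_1$. Then $\mathbb U_{1-}$ is a semilocal Lie superalgebra. In particular, for $x\in\mathfrak g$ and $\phi\in\mathbb U_{-1}$, $[x,\phi](u)=[x,\phi(u)]-\phi(x\cdot u)$.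
   Context: All vector spaces are over $\mathbb{K}=\mathbb{R}$ or $\mathbb{C}$, $\mathbb{Z}$-graded, parity equal to degree mod 2; $|x|$ is the degree. A semilocal Lie superalgebra is a graded space concentrated in degrees $\le1$ with bilinear brackets $A_i\otimes A_j\to A_{i+j}$ defined whenever $i+j\le 1$, satisfying $[x,y]=-(-1)^{|x||y|}[y,x]$ and $[x,[y,z]]-(-1)^{|x||y|}[y,[x,z]]=[[x,y],z]$ whenever all brackets involved are defined. *)

(* Defs.v *)
From mathcomp Require Import all_boot all_order all_algebra.
Set Implicit Arguments.
Unset Strict Implicit.
Unset Printing Implicit Defensive.
Import GRing.Theory Num.Theory.
Local Open Scope ring_scope.

Definition lie_algebra (K : numFieldType) (G : lmodType K)
    (lb : G -> G -> G) : Prop :=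
  [/\ (forall (c : K) x y z, lb (c *: x + y) z = c *: lb x z + lb y z),
      (forall (c : K) x y z, lb x (c *: y + z) = c *: lb x y + lb x z),
      (forall x, lb x x = 0) &
      (forall x y z, lb x (lb y z) + lb y (lb z x) + lb z (lb x y) = 0)].

Definition lie_module (K : numFieldType) (G V : lmodType K)
    (lb : G -> G -> G) (act : G -> V -> V) : Prop :=
  [/\ (forall (c : K) x y v, act (c *: x + y) v = c *: act x v + act y v),
      (forall (c : K) x u v, act x (c *: u + v) = c *: act x u + act x v) &
      (forall x y v, act (lb x y) v = act x (act y v) - act y (act x v))].

Definition sgn (K : numFieldType) (b : nat) : K := (-1) ^+ b.

(* Degrees are <= 1; we index them by n : nat, the component of index *)
(* n being the component of degree 1 - n.  Hence an element of index  *)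
(* n is odd iff n is even.  All homogeneous components are carved out *)
(* of one ambient carrier A (with its linear operations) by the       *)
(* predicate [hom n].  br n m x y is the bracket A_{1-n} x A_{1-m} ->  *)
(* A_{2-n-m}, relevant only when (1-n)+(1-m) <= 1, i.e. 1 <= n + m.    *)

Definition semilocal_lie_superalgebra (K : numFieldType) (A : Type)
    (zero : A) (add : A -> A -> A) (scale : K -> A -> A)
    (hom : nat -> A -> Prop) (br : nat -> nat -> A -> A -> A) : Prop :=
  (forall n, hom n zero) /\
  (forall n (c : K) x y, hom n x -> hom n y -> hom n (add (scale c x) y)) /\
  (forall n m x y, (1 <= n + m)%N -> hom n x -> hom m y ->
     hom (n + m).-1 (br n m x y)) /\
  (forall n m (c : K) x1 x2 y, (1 <= n + m)%N ->
     hom n x1 -> hom n x2 -> hom m y ->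
     br n m (add (scale c x1) x2) y = add (scale c (br n m x1 y)) (br n m x2 y)) /\
  (forall n m (c : K) x y1 y2, (1 <= n + m)%N ->
     hom n x -> hom m y1 -> hom m y2 ->
     br n m x (add (scale c y1) y2) = add (scale c (br n m x y1)) (br n m x y2)) /\
  (forall n m x y, (1 <= n + m)%N -> hom n x -> hom m y ->
     br n m x y = scale (- sgn K (~~ odd n && ~~ odd m)) (br m n y x)) /\
  (* super Jacobi: [x,[y,z]] - (-1)^{|x||y|} [y,[x,z]] = [[x,y],z],
     whenever all six brackets are defined *)
  (forall n m k x y z,
     (1 <= n + m)%N -> (1 <= m + k)%N -> (1 <= n + k)%N -> (2 <= n + m + k)%N ->
     hom n x -> hom m y -> hom k z ->
     add (br n (m + k).-1 x (br m k y z))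
         (scale (- sgn K (~~ odd n && ~~ odd m)) (br m (n + k).-1 y (br n k x z)))
     = br (n + m).-1 k (br n m x y) z).

(* the canonical (currying) identification of U_{-p} = Hom(V,Hom(V,.. *)
(* Hom(V,g))) with p-multilinear maps V^p -> g, represented as maps   *)
(* f : seq V -> G that vanish on lists of length <> p and are linear  *)
(* in each slot; phi(u) corresponds to (fun s => phi (u :: s)).        *)

Section Construction.
Variables (K : numFieldType) (G V : lmodType K).
Variables (lb : G -> G -> G) (act : G -> V -> V).

Definition T := (V * (seq V -> G))%type.
Definition tzero : T := (0, fun _ => 0).
Definition tadd (a b : T) : T := (a.1 + b.1, fun s => a.2 s + b.2 s).
Definition tscale (c : K) (a : T) : T := (c *: a.1, fun s => c *: a.2 s).

Definition mlin (f : seq V -> G) : Prop :=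
  forall (s1 s2 : seq V) (c : K) (u v : V),
    f (s1 ++ (c *: u + v) :: s2) = c *: f (s1 ++ u :: s2) + f (s1 ++ v :: s2).

Definition uhom (n : nat) (t : T) : Prop :=
  match n with
  | 0 => t.2 = (fun _ => 0)
  | p.+1 => [/\ t.1 = 0, (forall s, size s != p -> t.2 s = 0) & mlin t.2]
  end.

(* evaluation x(u) for x in U_{-p} (index p.+1), u in U_1:
   x(u) = x . u if p = 0, and the partial application otherwise *)
Definition ev (p : nat) (t : T) (u : V) : T :=
  match p with
  | 0 => (act (t.2 [::]) u, fun _ => 0)
  | _.+1 => (0, fun s => t.2 (u :: s))
  end.

(* Values of [x,y] for x in U_{-p}, y in U_{-q} (p, q >= 0), at the
   argument list s, following the recursion
   [x,y](u) = [x, y(u)] + (-1)^{|y|} [x(u), y],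
   with [x,v] = x(v), [v,y] = -(-1)^{|y|} y(v) for v in U_1, and the
   Lie bracket of g on g (x) g. *)
Fixpoint bnn (p q : nat) (x y : seq V -> G) (s : seq V) {struct s} : G :=
  match s with
  | [::] => lb (x [::]) (y [::])
  | u :: s' =>
      (match q with
       | 0 => x (act (y [::]) u :: s')                 (* [x, y.u] = x(y.u) *)
       | q'.+1 => bnn p q' x (fun t => y (u :: t)) s'
       end)
      + sgn K q *:
      (match p with
       | 0 => - sgn K q *: y (act (x [::]) u :: s')   (* [x.u, y] *)
       | p'.+1 => bnn p' q (fun t => x (u :: t)) y s'
       end)
  end.

Definition ubr (n m : nat) (x y : T) : T :=
  match n, m with
  | 0, 0 => tzero                                   (* undefined: junk *)
  | 0, q.+1 => tscale (- sgn K q) (ev q y x.1)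
  | p.+1, 0 => ev p x y.1
  | p.+1, q.+1 =>
      (0, fun s => if size s == (p + q)%N then bnn p q x.2 y.2 s else 0)
  end.

End Construction.

(* Main.v *)
Require Import Defs.
From mathcomp Require Import all_boot all_order all_algebra.
From mathcomp Require Import functions.
From mathcomp Require Import ring zify.
From Stdlib Require Import FunctionalExtensionality.
Import GRing.Theory Num.Theory.
Local Open Scope ring_scope.

Section Main.
Variables (K : numFieldType) (G V : lmodType K).
Variables (lb : G -> G -> G) (act : G -> V -> V).
Hypothesis HL : lie_algebra lb.
Hypothesis HM : lie_module lb act.

Local Notation TT := (T G V).
Local Notation br := (ubr lb act).
Local Notation bn := (bnn lb act).
Local Notation hom := (@uhom K G V).

Lemma lb0l z : lb 0 z = 0.
Proof.
move: HL => [h _ _ _]; have := h 1 0 0 z; rewrite !scale1r addr0 => e.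
by have := congr1 (fun w => w - lb 0 z) e; rewrite addrK subrr.
Qed.
Lemma lb0r z : lb z 0 = 0.
Proof.
move: HL => [_ h _ _]; have := h 1 z 0 0; rewrite !scale1r addr0 => e.
by have := congr1 (fun w => w - lb z 0) e; rewrite addrK subrr.
Qed.
Lemma lbDl x y z : lb (x + y) z = lb x z + lb y z.
Proof. by move: HL => [h _ _ _]; have := h 1 x y z; rewrite !scale1r. Qed.
Lemma lbDr x y z : lb z (x + y) = lb z x + lb z y.
Proof. by move: HL => [_ h _ _]; have := h 1 z x y; rewrite !scale1r. Qed.
Lemma lbZl c x z : lb (c *: x) z = c *: lb x z.
Proof. by move: HL => [h _ _ _]; have := h c x 0 z; rewrite !addr0 lb0l addr0. Qed.
Lemma lbZr c x z : lb z (c *: x) = c *: lb z x.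
Proof. by move: HL => [_ h _ _]; have := h c z x 0; rewrite !addr0 lb0r addr0. Qed.
Lemma lbC x y : lb x y = - lb y x.
Proof.
move: HL => [_ _ h _]; have := h (x + y).
rewrite lbDl !lbDr !h add0r addr0 => /eqP; rewrite addr_eq0 => /eqP //.
Qed.
Lemma lbJ x y z : lb x (lb y z) - lb y (lb x z) - lb (lb x y) z = 0.
Proof.
move: HL => [_ _ _ h]; rewrite -(h x y z) (lbC x z) (lbC (lb x y) z).
by rewrite -[- lb z x]scaleN1r lbZr scaleN1r !opprK.
Qed.

Lemma act0l v : act 0 v = 0.
Proof.
move: HM => [h _ _]; have := h 1 0 0 v; rewrite !scale1r addr0 => e.
by have := congr1 (fun w => w - act 0 v) e; rewrite addrK subrr.
Qed.
Lemma act0r z : act z 0 = 0.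
Proof.
move: HM => [_ h _]; have := h 1 z 0 0; rewrite !scale1r addr0 => e.
by have := congr1 (fun w => w - act z 0) e; rewrite addrK subrr.
Qed.
Lemma actDl x y z : act (x + y) z = act x z + act y z.
Proof. by move: HM => [h _ _]; have := h 1 x y z; rewrite !scale1r. Qed.
Lemma actDr x y z : act z (x + y) = act z x + act z y.
Proof. by move: HM => [_ h _]; have := h 1 z x y; rewrite !scale1r. Qed.
Lemma actZl c x z : act (c *: x) z = c *: act x z.
Proof. by move: HM => [h _ _]; have := h c x 0 z; rewrite !addr0 act0l addr0. Qed.
Lemma actZr c x z : act z (c *: x) = c *: act z x.
Proof. by move: HM => [_ h _]; have := h c z x 0; rewrite !addr0 act0r addr0. Qed.


Lemma mlin_cons (Y : seq V -> G) u : mlin Y -> mlin (fun t => Y (u :: t)).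
Proof. by move=> hY s1 s2 c a b; exact: (hY (u :: s1)). Qed.

Lemma mlin0 (Y : seq V -> G) s c a b : mlin Y ->
  Y ((c *: a + b) :: s) = c *: Y (a :: s) + Y (b :: s).
Proof. by move=> hY; exact: (hY [::]). Qed.

Lemma bnn_linl s : forall p q (X1 X2 Y : seq V -> G) c, mlin Y ->
  bn p q (fun t => c *: X1 t + X2 t) Y s = c *: bn p q X1 Y s + bn p q X2 Y s.
Proof.
elim: s => [|u s IH] p q X1 X2 Y c hY /=.
  by move: HL => [h _ _ _]; rewrite h.
have T1 : (match q with 0 => c *: X1 (act (Y [::]) u :: s) + X2 (act (Y [::]) u :: s)
   | q'.+1 => bn p q' (fun t => c *: X1 t + X2 t) (fun t => Y (u :: t)) s end)
   = c *: (match q with 0 => X1 (act (Y [::]) u :: s)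
   | q'.+1 => bn p q' X1 (fun t => Y (u :: t)) s end) + 
   (match q with 0 => X2 (act (Y [::]) u :: s)
   | q'.+1 => bn p q' X2 (fun t => Y (u :: t)) s end).
  by case: q => [|q] //; rewrite IH //; apply: mlin_cons.
have T2 : (match p with 0 => - sgn K q *: Y (act (c *: X1 [::] + X2 [::]) u :: s)
   | p'.+1 => bn p' q (fun t => c *: X1 (u :: t) + X2 (u :: t)) Y s end)
   = c *: (match p with 0 => - sgn K q *: Y (act (X1 [::]) u :: s)
   | p'.+1 => bn p' q (fun t => X1 (u :: t)) Y s end) + 
   (match p with 0 => - sgn K q *: Y (act (X2 [::]) u :: s)
   | p'.+1 => bn p' q (fun t => X2 (u :: t)) Y s end).
  clear T1; case: p => [|p]; last by rewrite IH.
  by rewrite actDl actZl mlin0 // scalerDr !scalerA mulrC.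
rewrite T1 T2 !scalerDr !scalerA [sgn K q * c]mulrC -!scalerA.
by rewrite addrACA.
Qed.


Lemma bnn_linr s : forall p q (X Y1 Y2 : seq V -> G) c, mlin X ->
  bn p q X (fun t => c *: Y1 t + Y2 t) s = c *: bn p q X Y1 s + bn p q X Y2 s.
Proof.
elim: s => [|u s IH] p q X Y1 Y2 c hX /=.
  by move: HL => [_ h _ _]; rewrite h.
have T1 : (match q with 0 => X (act (c *: Y1 [::] + Y2 [::]) u :: s)
   | q'.+1 => bn p q' X (fun t => c *: Y1 (u :: t) + Y2 (u :: t)) s end)
   = c *: (match q with 0 => X (act (Y1 [::]) u :: s)
   | q'.+1 => bn p q' X (fun t => Y1 (u :: t)) s end) + 
   (match q with 0 => X (act (Y2 [::]) u :: s)
   | q'.+1 => bn p q' X (fun t => Y2 (u :: t)) s end).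
  case: q => [|q]; last by rewrite IH.
  by rewrite actDl actZl mlin0.
have T2 : (match p with 0 => - sgn K q *: (c *: Y1 (act (X [::]) u :: s) + Y2 (act (X [::]) u :: s))
   | p'.+1 => bn p' q (fun t => X (u :: t)) (fun t => c *: Y1 t + Y2 t) s end)
   = c *: (match p with 0 => - sgn K q *: Y1 (act (X [::]) u :: s)
   | p'.+1 => bn p' q (fun t => X (u :: t)) Y1 s end) + 
   (match p with 0 => - sgn K q *: Y2 (act (X [::]) u :: s)
   | p'.+1 => bn p' q (fun t => X (u :: t)) Y2 s end).
  clear T1; case: p => [|p]; last by rewrite IH //; apply: mlin_cons.
  by rewrite scalerDr !scalerA mulrC.
rewrite T1 T2 !scalerDr !scalerA [sgn K q * c]mulrC -!scalerA.
by rewrite addrACA.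
Qed.


Lemma bnn_mlin s1 : forall p q (X Y : seq V -> G), mlin X -> mlin Y ->
  forall s2 c a b, bn p q X Y (s1 ++ (c *: a + b) :: s2) =
     c *: bn p q X Y (s1 ++ a :: s2) + bn p q X Y (s1 ++ b :: s2).
Proof.
elim: s1 => [|w s1 IH] p q X Y hX hY s2 c a b /=.
  have eY : (fun t => Y ((c *: a + b) :: t)) = (fun t => c *: Y (a :: t) + Y (b :: t)).
    by apply: functional_extensionality => t; exact: mlin0.
  have eX : (fun t => X ((c *: a + b) :: t)) = (fun t => c *: X (a :: t) + X (b :: t)).
    by apply: functional_extensionality => t; exact: mlin0.
  have T1 : (match q with 0 => X (act (Y [::]) (c *: a + b) :: s2)
   | q'.+1 => bn p q' X (fun t => Y ((c *: a + b) :: t)) s2 end)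
   = c *: (match q with 0 => X (act (Y [::]) a :: s2)
   | q'.+1 => bn p q' X (fun t => Y (a :: t)) s2 end) + 
   (match q with 0 => X (act (Y [::]) b :: s2)
   | q'.+1 => bn p q' X (fun t => Y (b :: t)) s2 end).
    case: q => [|q]; last by rewrite eY bnn_linr.
    by rewrite actDr actZr mlin0.
  have T2 : (match p with 0 => - sgn K q *: Y (act (X [::]) (c *: a + b) :: s2)
   | p'.+1 => bn p' q (fun t => X ((c *: a + b) :: t)) Y s2 end)
   = c *: (match p with 0 => - sgn K q *: Y (act (X [::]) a :: s2)
   | p'.+1 => bn p' q (fun t => X (a :: t)) Y s2 end) + 
   (match p with 0 => - sgn K q *: Y (act (X [::]) b :: s2)
   | p'.+1 => bn p' q (fun t => X (b :: t)) Y s2 end).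
    clear T1; case: p => [|p]; last by rewrite eX bnn_linl.
    by rewrite actDr actZr mlin0 // scalerDr !scalerA mulrC.
  rewrite T1 T2 !scalerDr !scalerA [sgn K q * c]mulrC -!scalerA.
  by rewrite addrACA.
have T1 : (match q with 0 => X (act (Y [::]) w :: s1 ++ (c *: a + b) :: s2)
   | q'.+1 => bn p q' X (fun t => Y (w :: t)) (s1 ++ (c *: a + b) :: s2) end)
   = c *: (match q with 0 => X (act (Y [::]) w :: s1 ++ a :: s2)
   | q'.+1 => bn p q' X (fun t => Y (w :: t)) (s1 ++ a :: s2) end) + 
   (match q with 0 => X (act (Y [::]) w :: s1 ++ b :: s2)
   | q'.+1 => bn p q' X (fun t => Y (w :: t)) (s1 ++ b :: s2) end).
  case: q => [|q]; last by rewrite IH //; apply: mlin_cons.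
  exact: (hX (_ :: s1)).
have T2 : (match p with 0 => - sgn K q *: Y (act (X [::]) w :: s1 ++ (c *: a + b) :: s2)
   | p'.+1 => bn p' q (fun t => X (w :: t)) Y (s1 ++ (c *: a + b) :: s2) end)
   = c *: (match p with 0 => - sgn K q *: Y (act (X [::]) w :: s1 ++ a :: s2)
   | p'.+1 => bn p' q (fun t => X (w :: t)) Y (s1 ++ a :: s2) end) + 
   (match p with 0 => - sgn K q *: Y (act (X [::]) w :: s1 ++ b :: s2)
   | p'.+1 => bn p' q (fun t => X (w :: t)) Y (s1 ++ b :: s2) end).
  clear T1; case: p => [|p]; last by rewrite IH //; apply: mlin_cons.
  by rewrite (hY (_ :: s1)) scalerDr !scalerA mulrC.
rewrite T1 T2 !scalerDr !scalerA [sgn K q * c]mulrC -!scalerA.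
by rewrite addrACA.
Qed.


Lemma sgnE' n : sgn K n = if odd n then -1 else 1.
Proof. by rewrite /sgn -signr_odd; case: (odd n); rewrite ?expr1 ?expr0. Qed.

Lemma comb2 (a b c d : K) (A B : G) : a = c -> b = d -> a *: A + b *: B = c *: A + d *: B.
Proof. by move=> -> ->. Qed.

Lemma oddb (b : bool) : odd b = b.
Proof. by case: b. Qed.

Ltac sgns := rewrite ?sgnE' /= ?oddD ?oddM ?oddb ?negbK /=;
  repeat match goal with |- context [odd ?n] => case: (odd n) end; rewrite /=; ring.

Lemma bnn_anti s : forall p q (X Y : seq V -> G), size s = (p + q)%N ->
  bn p q X Y s = - sgn K (p * q) *: bn q p Y X s.
Proof.
elim: s => [|u s IH] [|p] [|q] X Y //= hs; try lia.
- by rewrite lbC /sgn expr0 scaleN1r.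
- rewrite (IH 0 q); try lia.
  rewrite -[Y _]scale1r !scalerDr !scalerA addrC; apply: comb2; sgns.
- rewrite [bn 0 p _ _ s](IH 0 p); try lia.
  rewrite -[X _]scale1r !scalerDr !scalerA [RHS]addrC; apply: comb2; sgns.
- rewrite (IH p.+1 q) ?[bn q.+1 p _ _ s](IH q.+1 p); try lia.
  rewrite !scalerDr !scalerA addrC; apply: comb2; sgns.
Qed.


Lemma bnn_addl s p q (X1 X2 Y : seq V -> G) : mlin Y ->
  bn p q (fun t => X1 t + X2 t) Y s = bn p q X1 Y s + bn p q X2 Y s.
Proof.
move=> hY; have e : (fun t => X1 t + X2 t) = (fun t => 1 *: X1 t + X2 t).
  by apply: functional_extensionality => t; rewrite scale1r.
by rewrite e bnn_linl // scale1r.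
Qed.
Lemma bnn_addr s p q (X Y1 Y2 : seq V -> G) : mlin X ->
  bn p q X (fun t => Y1 t + Y2 t) s = bn p q X Y1 s + bn p q X Y2 s.
Proof.
move=> hY; have e : (fun t => Y1 t + Y2 t) = (fun t => 1 *: Y1 t + Y2 t).
  by apply: functional_extensionality => t; rewrite scale1r.
by rewrite e bnn_linr // scale1r.
Qed.
Lemma bnn0l s p q (Y : seq V -> G) : mlin Y -> bn p q (fun _ => 0) Y s = 0.
Proof.
move=> hY; have := bnn_addl s p q (fun _ => 0) (fun _ => 0) Y hY.
have -> : (fun _ : seq V => (0 : G) + 0) = (fun _ => 0).
  by apply: functional_extensionality => t; rewrite addr0.
move=> e; have := congr1 (fun w => w - bn p q (fun _ => 0) Y s) e.
by rewrite addrK subrr.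
Qed.
Lemma bnn0r s p q (X : seq V -> G) : mlin X -> bn p q X (fun _ => 0) s = 0.
Proof.
move=> hY; have := bnn_addr s p q X (fun _ => 0) (fun _ => 0) hY.
have -> : (fun _ : seq V => (0 : G) + 0) = (fun _ => 0).
  by apply: functional_extensionality => t; rewrite addr0.
move=> e; have := congr1 (fun w => w - bn p q X (fun _ => 0) s) e.
by rewrite addrK subrr.
Qed.
Lemma bnn_scalel s p q c (X Y : seq V -> G) : mlin Y ->
  bn p q (fun t => c *: X t) Y s = c *: bn p q X Y s.
Proof.
move=> hY; have e : (fun t => c *: X t) = (fun t => c *: X t + (fun _ => 0) t).
  by apply: functional_extensionality => t; rewrite addr0.
by rewrite e bnn_linl // bnn0l // addr0.
Qed.
Lemma bnn_scaler s p q c (X Y : seq V -> G) : mlin X ->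
  bn p q X (fun t => c *: Y t) s = c *: bn p q X Y s.
Proof.
move=> hY; have e : (fun t => c *: Y t) = (fun t => c *: Y t + (fun _ => 0) t).
  by apply: functional_extensionality => t; rewrite addr0.
by rewrite e bnn_linr // bnn0r // addr0.
Qed.

Lemma addTE (a b : TT) : a + b = (a.1 + b.1, fun s => a.2 s + b.2 s).
Proof. by []. Qed.
Lemma scaleTE c (a : TT) : c *: a = (c *: a.1, fun s => c *: a.2 s).
Proof. by []. Qed.
Lemma oppTE (a : TT) : - a = (- a.1, fun s => - a.2 s).
Proof. by []. Qed.
Lemma zeroTE : (0 : TT) = (0, fun _ => 0).
Proof. by []. Qed.
Lemma teq (a b : TT) : a.1 = b.1 -> (forall s, a.2 s = b.2 s) -> a = b.
Proof.
case: a b => [a1 a2] [b1 b2] /= -> e; congr pair.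
exact: functional_extensionality.
Qed.

Lemma hom0 n : hom n (0 : TT).
Proof.
rewrite zeroTE; case: n => [|n] //=; split=> // s1 s2 c u v; by rewrite scaler0 addr0.
Qed.
Lemma homD n (a b : TT) : hom n a -> hom n b -> hom n (a + b).
Proof.
rewrite addTE; case: n => [|n] /=.
  by move=> ha hb; rewrite ha hb; apply: functional_extensionality => s; rewrite addr0.
move=> [a1 a2 a3] [b1 b2 b3]; split.
- by rewrite a1 b1 addr0.
- by move=> s hs; rewrite a2 // b2 // addr0.
- by move=> s1 s2 c u v; rewrite a3 b3 scalerDr addrACA.
Qed.
Lemma homZ n c (a : TT) : hom n a -> hom n (c *: a).
Proof.
rewrite scaleTE; case: n => [|n] /=.
  by move=> ha; rewrite ha; apply: functional_extensionality => s; rewrite scaler0.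
move=> [a1 a2 a3]; split.
- by rewrite a1 scaler0.
- by move=> s hs; rewrite a2 // scaler0.
- by move=> s1 s2 d u v; rewrite a3 scalerDr !scalerA mulrC.
Qed.
Lemma homN n (a : TT) : hom n a -> hom n (- a).
Proof. by move=> h; rewrite -scaleN1r; apply: homZ. Qed.
Lemma homB n (a b : TT) : hom n a -> hom n b -> hom n (a - b).
Proof. by move=> ha hb; apply: homD => //; apply: homN. Qed.

Lemma mlinD0 (Y : seq V -> G) s u v : mlin Y -> Y ((u + v) :: s) = Y (u :: s) + Y (v :: s).
Proof. by move=> h; have := @mlin0 Y s 1 u v h; rewrite !scale1r. Qed.
Lemma mlin00 (Y : seq V -> G) s : mlin Y -> Y (0 :: s) = 0.
Proof.
move=> h; have := @mlinD0 Y s 0 0 h; rewrite addr0 => e.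
by have := congr1 (fun w => w - Y (0 :: s)) e; rewrite addrK subrr.
Qed.
Lemma mlinZ0 (Y : seq V -> G) s c u : mlin Y -> Y ((c *: u) :: s) = c *: Y (u :: s).
Proof. by move=> h; rewrite -[c *: u]addr0 mlin0 // mlin00 // addr0. Qed.

Lemma brSS p q (x y : TT) : br p.+1 q.+1 x y =
  (0, fun s => if size s == (p + q)%N then bn p q x.2 y.2 s else 0).
Proof. by []. Qed.
Lemma brS0 p (x u : TT) : br p.+1 0 x u = ev act p x u.1.
Proof. by []. Qed.
Lemma br0S q (u y : TT) : br 0 q.+1 u y = - sgn K q *: ev act q y u.1.
Proof. by []. Qed.
Lemma br00 (x y : TT) : br 0 0 x y = 0.
Proof. by []. Qed.
Lemma ev0 (x : TT) u : ev act 0 x u = (act (x.2 [::]) u, fun _ => 0).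
Proof. by []. Qed.
Lemma evS p (x : TT) u : ev act p.+1 x u = (0, fun s => x.2 (u :: s)).
Proof. by []. Qed.

Lemma evDt p (a b : TT) u : ev act p (a + b) u = ev act p a u + ev act p b u.
Proof.
by case: p => [|p]; rewrite ?ev0 ?evS addTE /=; apply: teq => [|s] /=;
  rewrite ?actDl ?addr0.
Qed.
Lemma evZt p c (a : TT) u : ev act p (c *: a) u = c *: ev act p a u.
Proof.
by case: p => [|p]; rewrite ?ev0 ?evS scaleTE /=; apply: teq => [|s] /=;
  rewrite ?actZl ?scaler0.
Qed.
Lemma evDu p (y : TT) u v : hom p.+1 y -> ev act p y (u + v) = ev act p y u + ev act p y v.
Proof.
case: p => [|p] hy; rewrite ?ev0 ?evS addTE /=; apply: teq => [|s] /=;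
  rewrite ?actDr ?addr0 //.
by case: hy => _ _ h; rewrite mlinD0.
Qed.
Lemma evZu p c (y : TT) u : hom p.+1 y -> ev act p y (c *: u) = c *: ev act p y u.
Proof.
case: p => [|p] hy; rewrite ?ev0 ?evS scaleTE /=; apply: teq => [|s] /=;
  rewrite ?actZr ?scaler0 //.
by case: hy => _ _ h; rewrite mlinZ0.
Qed.

Lemma hom_ev p (x : TT) u : hom p.+1 x -> hom p (ev act p x u).
Proof.
case: p => [|p] //= [_ h1 h2]; split=> //.
- by move=> s hs; rewrite h1.
- exact: mlin_cons.
Qed.

Lemma hom_br n m (x y : TT) : hom n x -> hom m y -> (1 <= n + m)%N ->
  hom (n + m).-1 (br n m x y).
Proof.
case: n => [|p]; case: m => [|q] hx hy // _.
- by rewrite br0S; apply: homZ; apply: hom_ev.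
- by rewrite addn0 brS0; apply: hom_ev.
rewrite brSS addnS /=; split => //.
- by move=> s /negbTE ->.
move=> s1 s2 c u v; rewrite !size_cat /=.
case: eqP => _; last by rewrite scaler0 addr0.
case: hx => _ _ hx; case: hy => _ _ hy.
exact: bnn_mlin.
Qed.

Lemma hom_mlin p (x : TT) : hom p.+1 x -> mlin x.2.
Proof. by case. Qed.

Lemma brDl n m (a b y : TT) : hom m y -> br n m (a + b) y = br n m a y + br n m b y.
Proof.
case: n => [|p]; case: m => [|q] hy.
- by rewrite !br00; apply: teq => [|s] /=; rewrite addr0.
- by rewrite !br0S addTE /= evDu // scalerDr.
- by rewrite !brS0 evDt.
rewrite !brSS !addTE; apply: teq => [|s] /=; first by rewrite addr0.
case: eqP => _; last by rewrite addr0.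
by rewrite bnn_addl //; apply: hom_mlin hy.
Qed.
Lemma brZl n m c (a y : TT) : hom m y -> br n m (c *: a) y = c *: br n m a y.
Proof.
case: n => [|p]; case: m => [|q] hy.
- by rewrite !br00; apply: teq => [|s] /=; rewrite scaler0.
- by rewrite !br0S scaleTE /= evZu // !scalerA mulrC.
- by rewrite !brS0 evZt.
rewrite !brSS !scaleTE; apply: teq => [|s] /=; first by rewrite scaler0.
case: eqP => _; last by rewrite scaler0.
by rewrite bnn_scalel //; apply: hom_mlin hy.
Qed.
Lemma brDr n m (x a b : TT) : hom n x -> br n m x (a + b) = br n m x a + br n m x b.
Proof.
case: n => [|p]; case: m => [|q] hx.
- by rewrite !br00; apply: teq => [|s] /=; rewrite addr0.
- by rewrite !br0S evDt scalerDr.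
- by rewrite !brS0 addTE /= evDu.
rewrite !brSS !addTE; apply: teq => [|s] /=; first by rewrite addr0.
case: eqP => _; last by rewrite addr0.
by rewrite bnn_addr //; apply: hom_mlin hx.
Qed.
Lemma brZr n m c (x a : TT) : hom n x -> br n m x (c *: a) = c *: br n m x a.
Proof.
case: n => [|p]; case: m => [|q] hx.
- by rewrite !br00; apply: teq => [|s] /=; rewrite scaler0.
- by rewrite !br0S evZt !scalerA mulrC.
- by rewrite !brS0 scaleTE /= evZu.
rewrite !brSS !scaleTE; apply: teq => [|s] /=; first by rewrite scaler0.
case: eqP => _; last by rewrite scaler0.
by rewrite bnn_scaler //; apply: hom_mlin hx.
Qed.
Lemma brNl n m (a y : TT) : hom m y -> br n m (- a) y = - br n m a y.
Proof. by move=> h; rewrite -!scaleN1r brZl. Qed.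
Lemma brNr n m (x a : TT) : hom n x -> br n m x (- a) = - br n m x a.
Proof. by move=> h; rewrite -!scaleN1r brZr. Qed.
Lemma brBl n m (a b y : TT) : hom m y -> br n m (a - b) y = br n m a y - br n m b y.
Proof. by move=> h; rewrite brDl // brNl. Qed.
Lemma brBr n m (x a b : TT) : hom n x -> br n m x (a - b) = br n m x a - br n m x b.
Proof. by move=> h; rewrite brDr // brNr. Qed.

Lemma br_anti n m (x y : TT) :
  br n m x y = - sgn K (~~ odd n && ~~ odd m) *: br m n y x.
Proof.
case: n => [|p]; case: m => [|q].
- by rewrite !br00; apply: teq => [|s] /=; rewrite scaler0.
- by rewrite br0S brS0; congr (_ *: _); sgns.
- by rewrite br0S brS0 scalerA -[LHS]scale1r; congr (_ *: _); sgns.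
rewrite !brSS !scaleTE; apply: teq => [|s] /=; first by rewrite scaler0.
rewrite addnC; case: eqP => [/eqP hs|]; last by rewrite scaler0.
rewrite bnn_anti; last by rewrite addnC; apply/eqP.
by congr (_ *: _); sgns.
Qed.

Lemma fD (f g : seq V -> G) s : (f + g) s = f s + g s.
Proof. by []. Qed.
Lemma fZ c (f : seq V -> G) s : (c *: f) s = c *: f s.
Proof. by []. Qed.

Lemma brD p q (x y U : TT) : hom p.+1 x -> hom q.+1 y ->
  br (p + q).+1 0 (br p.+1 q.+1 x y) U =
  br p.+1 q x (br q.+1 0 y U) + sgn K q *: br p q.+1 (br p.+1 0 x U) y.
Proof.
case: p => [|p]; case: q => [|q] hx hy; rewrite ?addn0 ?add0n ?addSn;
  apply: teq => [|s] /=; rewrite ?fD ?fZ ?add0n ?addn0 ?addSn ?addnS /=;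
  rewrite ?scaler0 ?addr0 //.
- move: HM => [_ _ ->]; by rewrite /sgn expr0 scale1r scaleN1r.
- rewrite eqSS; case: eqP => // hs; case: hy => _ hy _.
  by rewrite hy ?scaler0 ?addr0 //= eqSS; apply/eqP.
- rewrite eqSS; case: eqP => // hs; case: hx => _ hx _.
  by rewrite hx ?scaler0 ?addr0 //= eqSS; apply/eqP.
- by rewrite !eqSS; case: eqP => //; rewrite scaler0 addr0.
Qed.

Arguments ubr : simpl never.

Lemma br0S' q (u y : TT) : br 0 q.+1 u y = - sgn K q *: br q.+1 0 y u.
Proof. by []. Qed.

Lemma brD' N p q (x y U : TT) : N = (p + q)%N -> hom p.+1 x -> hom q.+1 y ->
  br N.+1 0 (br p.+1 q.+1 x y) U =
  br p.+1 q x (br q.+1 0 y U) + sgn K q *: br p q.+1 (br p.+1 0 x U) y.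
Proof. by move=> ->; apply: brD. Qed.

Lemma hom_br' N n m (x y : TT) : hom n x -> hom m y -> (n + m).-1 = N -> (1 <= n + m)%N ->
  hom N (br n m x y).
Proof. by move=> hx hy <-; apply: hom_br. Qed.

Definition Jac n m k (x y z : TT) : TT :=
  br n (m + k).-1 x (br m k y z) +
  (- sgn K (~~ odd n && ~~ odd m)) *: br m (n + k).-1 y (br n k x z) -
  br (n + m).-1 k (br n m x y) z.

Lemma comb_k0 (W : lmodType K) (A B : W) (a b : K) : a = b -> A + a *: B - (A + b *: B) = 0.
Proof. by move=> ->; rewrite subrr. Qed.
Lemma comb_n0 (W : lmodType K) (A B : W) (c1 c2 e c3 c4 : K) :
  c1 + e * c3 = 0 -> c1 * c2 = c4 -> c1 *: (A + c2 *: B) + e *: (c3 *: A) - c4 *: B = 0.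
Proof.
move=> h1 h2; rewrite scalerDr !scalerA h2 addrAC addrK -scalerDl h1 scale0r //.
Qed.
Lemma comb_m0 (W : lmodType K) (A B : W) (c1 e c2 c3 : K) :
  c1 + e * c2 = 0 -> e * c2 * c3 = 1 -> c1 *: A + e *: (c2 *: (A + c3 *: B)) - B = 0.
Proof.
move=> h1 h2; rewrite !scalerDr !scalerA h2 scale1r addrA addrK -scalerDl h1 scale0r //.
Qed.

Lemma jac_k0 p q (x y U : TT) : hom p.+1 x -> hom q.+1 y -> Jac p.+1 q.+1 0 x y U = 0.
Proof.
move=> hx hy; rewrite /Jac !addn0 addSn addnS /=.
rewrite brD // (br_anti q.+1 p y) scalerA; apply: comb_k0; sgns.
Qed.

Lemma jac_n0 q r (U y z : TT) : hom q.+1 y -> hom r.+1 z -> Jac 0 q.+1 r.+1 U y z = 0.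
Proof.
move=> hy hz; rewrite /Jac !add0n addSn addnS /=.
rewrite !br0S' brD // brZr // brZl //; apply: comb_n0; sgns.
Qed.

Lemma jac_m0 p r (x U z : TT) : hom p.+1 x -> hom r.+1 z -> Jac p.+1 0 r.+1 x U z = 0.
Proof.
move=> hx hz; rewrite /Jac add0n addn0 addSn addnS /=.
rewrite !br0S' brZr // brD //; apply: comb_m0; sgns.
Qed.

Lemma sum3 (W : zmodType) (a1 a2 a3 b1 b2 b3 : W) :
  (a1 + a2 + a3) + (b1 + b2 + b3) = (a1 + b1) + (a2 + b2) + (a3 + b3).
Proof. by rewrite addrACA (addrACA a1). Qed.

Lemma combo (W : lmodType K) (a1 a2 a3 b1 b2 b3 c1 c2 c3 : W) (e e' e'' sr sq sqr spr : K) :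
 e * spr = sr * e' -> e * sr = sqr * e'' -> sr * sq = sqr ->
 (a1 + sr *: a2 + sqr *: a3) + e *: (b1 + sr *: b2 + spr *: b3) - (c1 + sr *: (c2 + sq *: c3))
 = (a1 + e *: b1 - c1) + sr *: (a2 + e' *: b3 - c2) + sqr *: (a3 + e'' *: b2 - c3).
Proof.
move=> h1 h2 h3; rewrite !scalerDr !scalerN !scalerA h1 h2 h3.
rewrite [e *: b1 + _ + _]addrAC sum3 opprD opprD [- c1 + _]addrA sum3 //.
Qed.

Lemma JacSSS p q r (x y z : TT) : Jac p.+1 q.+1 r.+1 x y z =
  br p.+1 (q + r).+1 x (br q.+1 r.+1 y z) +
  (- sgn K (~~ odd p.+1 && ~~ odd q.+1)) *: br q.+1 (p + r).+1 y (br p.+1 r.+1 x z) -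
  br (p + q).+1 r.+1 (br p.+1 q.+1 x y) z.
Proof. by rewrite /Jac !addSn !addnS. Qed.

Lemma hom_jac p q r (x y z : TT) : hom p.+1 x -> hom q.+1 y -> hom r.+1 z ->
  hom (p + q + r).+1 (Jac p.+1 q.+1 r.+1 x y z).
Proof.
move=> hx hy hz; rewrite JacSSS; apply: homB; first apply: homD.
all: solve [repeat (first [done | lia | apply: homZ | apply: hom_br'])].
Qed.

Ltac homs := solve [repeat (first [done | lia | apply: homZ | apply: hom_br'])].

Lemma jac_delta p q r (x y z U : TT) : hom p.+1 x -> hom q.+1 y -> hom r.+1 z -> hom 0 U ->
  br (p + q + r).+1 0 (Jac p.+1 q.+1 r.+1 x y z) U =
  Jac p.+1 q.+1 r x y (br r.+1 0 z U) + sgn K r *: Jac p.+1 q r.+1 x (br q.+1 0 y U) z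
  + sgn K (q + r) *: Jac p q.+1 r.+1 (br p.+1 0 x U) y z.
Proof.
move=> hx hy hz hU; rewrite JacSSS brBl // brDl // brZl //.
rewrite (@brD' (p + q + r) p (q + r)) ?addnA //; last homs.
rewrite (@brD' (p + q + r) q (p + r)); [|lia|homs|homs].
rewrite (@brD' (p + q + r) (p + q) r) //; last homs.
rewrite (brD q r) // (brD p r) // (brD p q) //.
rewrite !brDr // !brZr // !brDl // !brZl //.
rewrite /Jac !addSn !addnS /=.
apply: combo; sgns.
Qed.

Lemma pD2 (a b : TT) : (a + b).2 = a.2 + b.2. Proof. by []. Qed.
Lemma pZ2 c (a : TT) : (c *: a).2 = c *: a.2. Proof. by []. Qed.
Lemma pN2 (a : TT) : (- a).2 = - a.2. Proof. by []. Qed.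
Lemma fN (f : seq V -> G) s : (- f) s = - f s. Proof. by []. Qed.
Lemma p02 s : (0 : TT).2 s = 0. Proof. by []. Qed.

Lemma jac_SSS s : forall p q r (x y z : TT), hom p.+1 x -> hom q.+1 y -> hom r.+1 z ->
  (Jac p.+1 q.+1 r.+1 x y z).2 s = 0.
Proof.
elim: s => [|u s IH] p q r x y z hx hy hz.
  have [E|E] := eqVneq (p + q + r)%N 0%N.
    have [-> [-> ->]] : (p = 0 /\ q = 0 /\ r = 0)%N by lia.
    rewrite JacSSS !brSS /= !addn0 !fD fZ fN /=.
    by rewrite /sgn /= expr0 scaleN1r; apply: lbJ.
  by move: (@hom_jac _ _ _ _ _ _ hx hy hz) => /= [_ -> //]; rewrite eq_sym.
have [E|E] := eqVneq (p + q + r)%N 0%N.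
  by move: (@hom_jac _ _ _ _ _ _ hx hy hz) => /= [_ -> //]; rewrite E.
set U : TT := (u, fun _ => 0).
have hU : hom 0 U by [].
have e1 : (Jac p.+1 q.+1 r.+1 x y z).2 (u :: s) =
          (br (p + q + r).+1 0 (Jac p.+1 q.+1 r.+1 x y z) U).2 s.
  by move: E; case: (p + q + r)%N => // N _; rewrite brS0 evS.
rewrite e1 jac_delta // pD2 fD pD2 fD pZ2 fZ pZ2 fZ.
have Z1 : (Jac p.+1 q.+1 r x y (br r.+1 0 z U)).2 s = 0.
  clear e1 E; move: hz; case: r => [|r] hz; first by rewrite jac_k0.
  by apply: IH => //; rewrite brS0; apply: hom_ev.
have Z2 : (Jac p.+1 q r.+1 x (br q.+1 0 y U) z).2 s = 0.
  clear e1 E Z1; move: hy; case: q => [|q] hy; first by rewrite jac_m0.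
  by apply: IH => //; rewrite brS0; apply: hom_ev.
have Z3 : (Jac p q.+1 r.+1 (br p.+1 0 x U) y z).2 s = 0.
  clear e1 E Z1 Z2; move: hx; case: p => [|p] hx; first by rewrite jac_n0.
  by apply: IH => //; rewrite brS0; apply: hom_ev.
by rewrite Z1 Z2 Z3 !scaler0 !addr0.
Qed.

Lemma jac0 n m k (x y z : TT) : (1 <= n + m)%N -> (1 <= m + k)%N -> (1 <= n + k)%N ->
  hom n x -> hom m y -> hom k z -> Jac n m k x y z = 0.
Proof.
case: n => [|p]; case: m => [|q]; case: k => [|r] //= _ _ _ hx hy hz.
- exact: jac_n0.
- exact: jac_m0.
- exact: jac_k0.
apply: teq => [|s]; last by rewrite jac_SSS.
by move: (@hom_jac _ _ _ _ _ _ hx hy hz) => /= [].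
Qed.

Lemma taddE (a b : TT) : tadd a b = a + b. Proof. by []. Qed.
Lemma tscaleE c (a : TT) : tscale c a = c *: a. Proof. by []. Qed.

Lemma main_thm :
  semilocal_lie_superalgebra (@tzero K G V) (@tadd K G V) (@tscale K G V)
    (@uhom K G V) (ubr lb act) /\
  (forall (x phi : T G V) (u : V), uhom 1 x -> uhom 2 phi ->
     ev act 1 (ubr lb act 1 2 x phi) u =
     tadd (ubr lb act 1 1 x (ev act 1 phi u))
          (tscale (-1) (ev act 1 phi (act (x.2 [::]) u)))).
Proof.
split.
  rewrite /semilocal_lie_superalgebra.
  split; first by move=> n; exact: hom0.
  split; first by move=> n c x y hx hy; rewrite taddE tscaleE; apply: homD => //; apply: homZ.
  split; first by move=> n m x y hnm hx hy; apply: hom_br.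
  split; first by move=> n m c x1 x2 y _ _ _ hy; rewrite !taddE !tscaleE brDl // brZl.
  split; first by move=> n m c x y1 y2 _ hx _ _; rewrite !taddE !tscaleE brDr // brZr.
  split; first by move=> n m x y _ _ _; rewrite tscaleE; apply: br_anti.
  move=> n m k x y z h1 h2 h3 _ hx hy hz; rewrite taddE tscaleE.
  by apply: subr0_eq; apply: jac0.
move=> x phi u hx hphi.
have := @brD 0 1 x phi (u, fun _ => 0) hx hphi.
move=> e; rewrite taddE tscaleE.
rewrite -[ev act 1 (br 1 2 x phi) u]/(br (0+1).+1 0 (br 1 2 x phi) (u, fun=>0)) e br0S scalerA.
by congr (_ + _ *: _); sgns.
Qed.

End Main.

Theorem proposition4p6 (K : numFieldType) (G V : lmodType K)
    (lb : G -> G -> G) (act : G -> V -> V) :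
  lie_algebra lb -> lie_module lb act ->
  semilocal_lie_superalgebra (@tzero K G V) (@tadd K G V) (@tscale K G V)
    (@uhom K G V) (ubr lb act) /\
  (forall (x phi : T G V) (u : V), uhom 1 x -> uhom 2 phi ->
     ev act 1 (ubr lb act 1 2 x phi) u =
     tadd (ubr lb act 1 1 x (ev act 1 phi u))
          (tscale (-1) (ev act 1 phi (act (x.2 [::]) u)))).
Proof. by move=> HL HM; apply: main_thm. Qed.
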